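(* Let $(\mathcal{S},\mathcal{A},r,p)$ be a weakly communicating MDP, $T$ the horizon, $H\ge2$, $\delta\in(0,1)$, and let $(s_t,a_t)_{t=1}^T$ be the state-action sequence generated by Optimistic Q-learning (defined in the context) with parameters $H,\delta$. Let $V^*,Q^*$ be the optimal value and Q-functions of the discounted MDP with discount factor $\gamma=1-1/H$. Then with probability at least $1-\delta$, $$\sum_{t=1}^T\big(Q^*(s_t,a_t)-\gamma V^*(s_t)-r(s_t,a_t)\big)\le 2\,\mathrm{sp}(v^* )\sqrt{2T\ln\tfrac1\delta}+2\,\mathrm{sp}(v^* ).$$
   Context: The MDP has finite state/action sets, known reward $r:\mathcal{S}\times\mathcal{A}\to[0,1]$, unknown kernel $p$; weakly communicating means $\mathcal{S}$ splits into states transient under every stationary policy and a set in which any two states are mutually accessible under some stationary policy. There exist $J^*\in[0,1]$ and $q^*$ with $J^*+q^*(s,a)=r(s,a)+\mathbb{E}_{s'\sim p(\cdot|s,a)}[v^*(s')]$, $v^*(s)=\max_a q^*(s,a)$, and $\mathrm{sp}(v^* )=\max_s v^*(s)-\min_s v^*(s)$. Discounted: $Q^*(s,a)=r(s,a)+\gamma\mathbb{E}_{s'\sim p(\cdot|s,a)}[V^*(s')]$, $V^*(s)=\max_aQ^*(s,a)$. Optimistic Q-learning with parameters $H\ge2,\delta$: $\gamma=1-1/H$, $\hat V_1\equiv H$, $Q_1=\hat Q_1\equiv H$, $n_1\equiv0$, $\alpha_\tau=\frac{H+1}{H+\tau}$, $b_\tau=4\,\mathrm{sp}(v^* )\sqrt{\frac{H}{\tau}\ln\frac{2T}{\delta}}$.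 For $t=1,\dots,T$: from the current state $s_t$ (with $s_1$ arbitrary) take $a_t\in\arg\max_a\hat Q_t(s_t,a)$, observe $s_{t+1}\sim p(\cdot|s_t,a_t)$; set $n_{t+1}(s_t,a_t)=n_t(s_t,a_t)+1$, $\tau=n_{t+1}(s_t,a_t)$, $Q_{t+1}(s_t,a_t)=(1-\alpha_\tau)Q_t(s_t,a_t)+\alpha_\tau[r(s_t,a_t)+\gamma\hat V_t(s_{t+1})+b_\tau]$, $\hat Q_{t+1}(s_t,a_t)=\min\{\hat Q_t(s_t,a_t),Q_{t+1}(s_t,a_t)\}$, $\hat V_{t+1}(s_t)=\max_a\hat Q_{t+1}(s_t,a)$; all other entries unchanged. *)

(* Defs.v *)
From HB Require Import structures.
From mathcomp Require Import all_boot all_order all_algebra.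
From mathcomp Require Import reals exp.
Set Implicit Arguments. Unset Strict Implicit. Unset Printing Implicit Defensive.
Import Order.TTheory GRing.Theory Num.Theory.
Local Open Scope ring_scope.

Section MDP.
Variables (R : realType) (S A : finType).

Definition is_kernel (p : S -> A -> S -> R) :=
  forall s a, (forall s', 0 <= p s a s') /\ \sum_(s' : S) p s a s' = 1.

Definition is_policy (pi : S -> A -> R) :=
  forall s, (forall a, 0 <= pi s a) /\ \sum_(a : A) pi s a = 1.

Definition step_rel (p : S -> A -> S -> R) (pi : S -> A -> R) : rel S :=
  fun x y => [exists a, (0 < pi x a) && (0 < p x a y)].

Definition accessible p pi (x y : S) : bool := connect (step_rel p pi) x y.

(* transience of a state in a finite Markov chain: some state accessible
   from it does not lead back to it *)
Definition transient p pi (s : S) : Prop :=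
  exists y, accessible p pi s y && ~~ accessible p pi y s.

Definition weakly_communicating (p : S -> A -> S -> R) : Prop :=
  exists C : {set S},
    (forall s, s \notin C -> forall pi, is_policy pi -> transient p pi s) /\
    (forall s s', s \in C -> s' \in C ->
       exists pi, is_policy pi /\ accessible p pi s s' /\ accessible p pi s' s).

Definition is_max (q : S -> A -> R) (v : S -> R) : Prop :=
  forall s, (forall a, q s a <= v s) /\ (exists a, v s = q s a).

Definition avg_opt (r : S -> A -> R) (p : S -> A -> S -> R)
  (J : R) (q : S -> A -> R) (v : S -> R) : Prop :=
  is_max q v /\
  forall s a, J + q s a = r s a + \sum_(s' : S) p s a s' * v s'.

Definition disc_opt (r : S -> A -> R) (p : S -> A -> S -> R) (gamma : R)
  (Q : S -> A -> R) (V : S -> R) : Prop :=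
  is_max Q V /\
  forall s a, Q s a = r s a + gamma * \sum_(s' : S) p s a s' * V s'.

(* span: max_s v s - min_s v s  (= max over pairs of v s - v s') *)
Definition sp (v : S -> R) : R :=
  \big[Num.max/0]_(s : S) \big[Num.max/0]_(s' : S) (v s - v s').

Record qstate := QState {
  Qf : S -> A -> R;
  Qh : S -> A -> R;
  Vh : S -> R;
  cnt : S -> A -> nat;
  cur : S
}.

Variables (r : S -> A -> R) (p : S -> A -> S -> R).
Variables (H delta : R) (T : nat) (spv : R).
(* tie-breaking rule: sel f is some maximizer of f *)
Variable sel : (A -> R) -> A.

Definition gam : R := 1 - H^-1.
Definition alpha (tau : nat) : R := (H + 1) / (H + tau%:R).
Definition bonus (tau : nat) : R :=
  4 * spv * Num.sqrt (H / tau%:R * ln (2 * T%:R / delta)).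

Definition act (st : qstate) : A := sel (Qh st (cur st)).

Definition upd {X : Type} (f : S -> A -> X) (s : S) (a : A) (x : X) :=
  fun s0 a0 => if (s0 == s) && (a0 == a) then x else f s0 a0.

Definition qstep (st : qstate) (s' : S) : qstate :=
  let s := cur st in
  let a := act st in
  let tau := (cnt st s a).+1 in
  let qn := (1 - alpha tau) * Qf st s a
            + alpha tau * (r s a + gam * Vh st s' + bonus tau) in
  let qh' := upd (Qh st) s a (Num.min (Qh st s a) qn) in
  let vh' := fun s0 => if s0 == s then \big[Num.max/qh' s a]_(b : A) qh' s b
                       else Vh st s0 in
  QState (upd (Qf st) s a qn) qh' vh' (upd (cnt st) s a tau) s'.

Definition qinit (s1 : S) : qstate :=
  QState (fun _ _ => H) (fun _ _ => H) (fun _ => H) (fun _ _ => 0%N) s1.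

Fixpoint qrun (st : qstate) (l : seq S) : qstate :=
  if l is x :: l' then qrun (qstep st x) l' else st.

(* algorithm state at time i+1 (i = 0..T-1), given observed next states xs *)
Definition state_at (s1 : S) (xs : seq S) (i : nat) : qstate :=
  qrun (qinit s1) (take i xs).

(* probability of the realization xs = (s_2, ..., s_{T+1}) *)
Definition traj_prob (s1 : S) (xs : T.-tuple S) : R :=
  \prod_(i < T) (let st := state_at s1 xs i in p (cur st) (act st) (tnth xs i)).

End MDP.

Arguments traj_prob {R S A} r p H delta T spv sel s1 xs.
Arguments state_at {R S A} r H delta T spv sel s1 xs i.

(* Main.v *)
Require Import Defs.
From HB Require Import structures.
From mathcomp Require Import all_boot all_order all_algebra.
From mathcomp Require Import reals exp.
From mathcomp Require Import ring lra.
From mathcomp Require sequences.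
Import Order.TTheory GRing.Theory Num.Theory.
Local Open Scope ring_scope.
Local Notation expR := sequences.expR.
Set Implicit Arguments. Unset Strict Implicit. Unset Printing Implicit Defensive.


Lemma expR_quad (R : realType) (x : R) : x <= 1 -> expR x <= 1 + x + 2 * x ^+ 2.
Proof.
move=> hx.
have e2 : expR x = expR (x / 2) ^+ 2 by rewrite expr2 -expRD; congr expR; field.
have h1 : 1 - x / 2 <= expR (- (x / 2)) by have := expR_ge1Dx (- (x / 2)); lra.
have hy : 0 < expR (x / 2) := expR_gt0 _.
have hyz : expR (x / 2) * expR (- (x / 2)) = 1 by rewrite expRxMexpNx_1.
set y := expR (x / 2) in e2 hy hyz *.
set z := expR (- (x / 2)) in h1 hyz *.
have hz : 1 / 2 <= 1 - x / 2 by lra.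
have hyz' : y * (1 - x / 2) <= 1 by nra.
have key : 1 <= (1 + x + 2 * x ^+ 2) * (1 - x / 2) ^+ 2.
  have : 0 <= x ^+ 2 * ((x - 1) * (2 * x - 5)) by apply: mulr_ge0; [exact: sqr_ge0| nra].
  move=> h; nra.
rewrite e2.
set w := 1 - x / 2 in hz hyz' key.
set c := 1 + x + 2 * x ^+ 2 in key *.
have c0 : 0 <= c by nra.
have yw0 : 0 <= y * w by apply: mulr_ge0; lra.
have h : (y * w) ^+ 2 <= 1 by rewrite expr2; nra.
have h2 : 0 <= y ^+ 2 * (c * w ^+ 2 - 1) by apply: mulr_ge0; [exact: sqr_ge0| lra].
have h3 : 0 <= c * (1 - (y * w) ^+ 2) by apply: mulr_ge0; lra.
rewrite exprMn in h3; nra.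
Qed.

Lemma argmax_ex (R : realType) (S : finType) (s0 : S) (f : S -> R) :
  exists s, forall s', f s' <= f s.
Proof.
case: (@arg_maxP _ R S s0 predT f erefl) => i _ Hi.
by exists i => s'; apply: Hi.
Qed.


Section W.
Variables (R : realType) (S : finType).

Definition W n (h0 : seq S) (f : seq S -> S -> R) :=
  \sum_(xs : n.-tuple S) \prod_(i < n) f (h0 ++ take i xs) (tnth xs i).

Lemma W_S n h0 f : W n.+1 h0 f = \sum_x f h0 x * W n (rcons h0 x) f.
Proof.
rewrite /W.
rewrite (reindex (fun p : S * n.-tuple S => [tuple of p.1 :: p.2])) /=; last first.
  exists (fun u : n.+1.-tuple S => (thead u, [tuple of behead u])).
    by case=> x t _ /=; congr pair; apply: val_inj.
  by move=> u _; rewrite /= -tuple_eta.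
rewrite -(pair_big predT predT (fun x (t : n.-tuple S) =>
   \prod_(i < n.+1) f (h0 ++ take i (x :: t)) (tnth [tuple of x :: t] i))) /=.
apply: eq_bigr => x _; rewrite mulr_sumr; apply: eq_bigr => t _.
rewrite big_ord_recl /= cats0 tnth0; congr (_ * _).
apply: eq_bigr => i _; rewrite tnthS; congr f.
by rewrite /bump /= -cat_rcons.
Qed.

Lemma W_ge0 n h0 f : (forall h s, 0 <= f h s) -> 0 <= W n h0 f.
Proof.
move=> f0; apply: sumr_ge0 => xs _; apply: prodr_ge0 => i _; exact: f0.
Qed.

Lemma W_le n h0 f B : (forall h s, 0 <= f h s) -> 0 <= B ->
  (forall h, \sum_x f h x <= B) -> W n h0 f <= B ^+ n.
Proof.
move=> f0 B0 hB; elim: n h0 => [|n IH] h0.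
  rewrite /W (big_pred1 [tuple]) ?big_ord0 ?expr0 // => t; apply/esym/eqP; exact: tuple0.
rewrite W_S exprS.
apply: (@le_trans _ _ (\sum_x f h0 x * B ^+ n)).
  by apply: ler_sum => x _; apply: ler_wpM2l => //; apply: IH.
by rewrite -mulr_suml ler_wpM2r // exprn_ge0.
Qed.

Lemma W_eq1 n h0 f : (forall h, \sum_x f h x = 1) -> W n h0 f = 1.
Proof.
move=> hB; elim: n h0 => [|n IH] h0.
  rewrite /W (big_pred1 [tuple]) ?big_ord0 // => t; apply/esym/eqP; exact: tuple0.
rewrite W_S.
under eq_bigr do rewrite IH mulr1.
exact: hB.
Qed.
End W.



Arguments argmax_ex {R S}.

Lemma argmin_ex (R : realType) (S : finType) (s0 : S) (f : S -> R) :
  exists s, forall s', f s <= f s'.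
Proof.
case: (argmax_ex s0 (fun s => - f s)) => s Hs; exists s => s'.
by have := Hs s'; rewrite lerN2.
Qed.
Arguments argmin_ex {R S}.

Section Span.
Variables (R : realType) (S A : finType).

Lemma sp_ge (v : S -> R) s s' : v s - v s' <= sp v.
Proof.
rewrite /sp (bigD1 s) //= le_max; apply/orP; left.
by rewrite (bigD1 s') //= le_max lexx.
Qed.

Lemma sp_ge0 (v : S -> R) (s : S) : 0 <= sp v.
Proof. by have := sp_ge v s s; rewrite subrr. Qed.

Variable p : S -> A -> S -> R.
Hypothesis hp : is_kernel p.

Lemma mean_le s a (f : S -> R) M : (forall s', f s' <= M) ->
  \sum_s' p s a s' * f s' <= M.
Proof.
move=> hf; case: (hp s a) => p0 p1.
apply: (@le_trans _ _ (\sum_s' p s a s' * M)).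
  by apply: ler_sum => s' _; apply: ler_wpM2l.
by rewrite -mulr_suml p1 mul1r.
Qed.

Lemma mean_ge s a (f : S -> R) M : (forall s', M <= f s') ->
  M <= \sum_s' p s a s' * f s'.
Proof.
move=> hf; case: (hp s a) => p0 p1.
apply: (@le_trans _ _ (\sum_s' p s a s' * M)).
  by rewrite -mulr_suml p1 mul1r.
by apply: ler_sum => s' _; apply: ler_wpM2l.
Qed.

Lemma span_bound (r : S -> A -> R) J q v g Q V (s0 : S) :
  avg_opt r p J q v -> disc_opt r p g Q V -> 0 <= g < 1 ->
  forall s s', V s - V s' <= 2 * sp v.
Proof.
move=> [qv hq] [QV hQ] /andP[g0 g1] s s'.
have qv1 : forall s a, q s a <= v s by move=> x; case: (qv x).
have qv2 : forall s, exists a, v s = q s a by move=> x; case: (qv x).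
have QV1 : forall s a, Q s a <= V s by move=> x; case: (QV x).
have QV2 : forall s, exists a, V s = Q s a by move=> x; case: (QV x).
pose e := fun s => V s - v s.
have [sM HM] := argmax_ex s0 e.
have [sm Hm] := argmin_ex s0 e.
have [vM HvM] := argmax_ex s0 v.
have [vm Hvm] := argmin_ex s0 v.
have PVe : forall s a, \sum_s' p s a s' * V s' =
    \sum_s' p s a s' * e s' + \sum_s' p s a s' * v s'.
  move=> x a; rewrite -big_split /=; apply: eq_bigr => y _; rewrite /e; ring.
have [a Ha] := QV2 sM.
have [b Hb] := qv2 sm.
have h1 := qv1 sM a.
have h2 := QV1 sm b.
have hQa := hQ sM a. have hQb := hQ sm b.
have hqa := hq sM a. have hqb := hq sm b.
rewrite PVe in hQa; rewrite PVe in hQb.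
have e1 : \sum_s' p sM a s' * e s' <= e sM by apply: mean_le.
have e2 : e sm <= \sum_s' p sm b s' * e s' by apply: mean_ge.
have v1 : \sum_s' p sm b s' * v s' <= v vM by apply: mean_le.
have v2 : v vm <= \sum_s' p sM a s' * v s' by apply: mean_ge.
have sv := sp_ge v vM vm.
have eM : e sM = V sM - v sM by [].
have em : e sm = V sm - v sm by [].
have ge1 : g * \sum_s' p sM a s' * e s' <= g * e sM by apply: ler_wpM2l.
have ge2 : g * e sm <= g * \sum_s' p sm b s' * e s' by apply: ler_wpM2l.
have eE : forall x, e x = V x - v x by [].
clearbody e.
have key : (1 - g) * (e sM - e sm) <= (1 - g) * sp v.
  set PeA := \sum_s' p sM a s' * e s' in e1 hQa ge1.
  set PeB := \sum_s' p sm b s' * e s' in e2 hQb ge2.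
  set PvA := \sum_s' p sM a s' * v s' in hqa v2 hQa.
  set PvB := \sum_s' p sm b s' * v s' in hqb v1 hQb.
  have : (1 - g) * PvB - (1 - g) * PvA <= (1 - g) * sp v.
    rewrite -mulrBr; apply: ler_wpM2l; lra.
  rewrite mulrDr in hQa; rewrite mulrDr in hQb; move=> hh; rewrite !mulrBl !mulrBr !mul1r in hh *; lra.
have key2 : e sM - e sm <= sp v.
  by rewrite -(ler_pM2l (_ : 0 < 1 - g)) //; lra.
have := HM s; have := Hm s'; have := sp_ge v s s'; rewrite !eE; lra.
Qed.
End Span.

Lemma cur_qrun (R : realType) (S A : finType) (r : S -> A -> R) H delta T spv sel
  (st : qstate R S A) (l : seq S) :
  cur (qrun r H delta T spv sel st l) = last (cur st) l.
Proof. by elim: l st => [|x l IH] st //=; rewrite IH. Qed.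

Lemma mean_lin (R : realType) (S A : finType) (p : S -> A -> S -> R) :
  is_kernel p -> forall s a (f : S -> R) al be,
  \sum_s' p s a s' * (al * f s' + be) = al * \sum_s' p s a s' * f s' + be.
Proof.
move=> hp s a f al be; case: (hp s a) => _ p1.
under eq_bigr do rewrite mulrDr mulrCA.
by rewrite big_split /= -mulr_sumr -mulr_suml p1 mul1r.
Qed.

Theorem lemma3 (R : realType) (S A : finType)
  (r : S -> A -> R) (p : S -> A -> S -> R)
  (Jstar : R) (qstar : S -> A -> R) (vstar : S -> R)
  (Qstar : S -> A -> R) (Vstar : S -> R)
  (T : nat) (H delta : R) (sel : (A -> R) -> A) (s1 : S) :
  is_kernel p ->
  (forall s a, 0 <= r s a <= 1) ->
  weakly_communicating p ->
  avg_opt r p Jstar qstar vstar ->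
  0 <= Jstar <= 1 ->
  2 <= H ->
  0 < delta < 1 ->
  (forall f a, f a <= f (sel f)) ->
  disc_opt r p (gam H) Qstar Vstar ->
  \sum_(xs : T.-tuple S |
          \sum_(i < T)
             (let st := state_at r H delta T (sp vstar) sel s1 xs i in
              Qstar (cur st) (act sel st) - gam H * Vstar (cur st)
              - r (cur st) (act sel st))
          <= 2 * sp vstar * Num.sqrt (2 * T%:R * ln (delta^-1)) + 2 * sp vstar)
     traj_prob r p H delta T (sp vstar) sel s1 xs
  >= 1 - delta.
Proof.
move=> hp _ _ havg _ hH /andP[d0 d1] _ hdisc.
set g := gam H.
have hi : 0 < H^-1 by rewrite invr_gt0; lra.
have hi1 : H^-1 <= 1 by rewrite invf_le1; lra.
have g0 : 0 <= g by rewrite /g /gam; lra.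
have g1 : g < 1 by rewrite /g /gam; lra.
set L := 2 * sp vstar.
have L0 : 0 <= L by rewrite /L; have := sp_ge0 vstar s1; lra.
have hV : forall s s', Vstar s - Vstar s' <= L.
  by apply: (span_bound hp s1 havg hdisc); rewrite g0 g1.
set K := ln delta^-1.
have K0 : 0 <= K by apply: ln_ge0; rewrite invf_cp1 //; lra.
set u := Num.sqrt (2 * T%:R * K).
have u0 : 0 <= u by apply: sqrtr_ge0.
have hu2 : u ^+ 2 = 2 * T%:R * K by rewrite sqr_sqrtr // !mulr_ge0 // ler0n.
set eps := L * u.
have eps0 : 0 <= eps by apply: mulr_ge0.
pose stH (h : seq S) := qrun r H delta T (sp vstar) sel (qinit A H s1) h.
pose c h := cur (stH h).
pose a h := act sel (stH h).
pose m h := \sum_s' p (c h) (a h) s' * Vstar s'.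
pose D (xs : T.-tuple S) := \sum_(i < T) (m (take i xs) - Vstar (tnth xs i)).
have [vM HvM] := argmax_ex s1 Vstar.
have [vm Hvm] := argmin_ex s1 Vstar.
have mle : forall h s', m h - Vstar s' <= L.
  move=> h s'; have : m h <= Vstar vM by apply: mean_le.
  have := hV vM s'; lra.
have traj0 : forall xs, 0 <= traj_prob r p H delta T (sp vstar) sel s1 xs.
  move=> xs; apply: prodr_ge0 => i _ /=; set st := state_at _ _ _ _ _ _ _ _ _; by case: (hp (cur st) (act sel st)) => ->.
have ctake : forall (xs : T.-tuple S) (i : 'I_T), c (take i.+1 xs) = tnth xs i.
  move=> xs i; rewrite /c /stH cur_qrun /= (take_nth s1) ?size_tuple //.
  by rewrite last_rcons (tnth_nth s1).
have decomp : forall xs : T.-tuple S,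
    \sum_(i < T)
             (let st := state_at r H delta T (sp vstar) sel s1 xs i in
              Qstar (cur st) (act sel st) - gam H * Vstar (cur st)
              - r (cur st) (act sel st))
    = g * D xs + g * (Vstar (c (take T xs)) - Vstar s1).
  move=> xs.
  have e1 : forall i : 'I_T,
      (let st := state_at r H delta T (sp vstar) sel s1 xs i in
              Qstar (cur st) (act sel st) - gam H * Vstar (cur st)
              - r (cur st) (act sel st))
      = g * (m (take i xs) - Vstar (tnth xs i))
        + g * (Vstar (c (take i.+1 xs)) - Vstar (c (take i xs))).
    move=> i /=; rewrite ctake.
    case: hdisc => _ hQ; rewrite hQ /m /c /a /stH /state_at; rewrite -/g; ring.
  rewrite (eq_bigr _ (fun i _ => e1 i)) big_split /= -!mulr_sumr /D.
  congr (_ + _); congr (_ * _).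
  rewrite -(big_mkord xpredT (fun k => Vstar (c (take k.+1 xs)) - Vstar (c (take k xs)))).
  by rewrite telescope_sumr // take0.
have good : forall xs : T.-tuple S, D xs <= eps ->
    \sum_(i < T)
             (let st := state_at r H delta T (sp vstar) sel s1 xs i in
              Qstar (cur st) (act sel st) - gam H * Vstar (cur st)
              - r (cur st) (act sel st))
     <= 2 * sp vstar * Num.sqrt (2 * T%:R * ln (delta^-1)) + 2 * sp vstar.
  move=> xs hD; rewrite decomp -/L -/K -/u -/eps.
  have := hV (c (take T xs)) s1.
  set Dl := Vstar _ - Vstar _ => hDl.
  have h1 : g * D xs <= eps.
    case: (lerP 0 (D xs)) => h.
      have : g * D xs <= 1 * D xs by apply: ler_wpM2r => //; lra.
      lra.
    have : g * D xs <= 0 by apply: mulr_ge0_le0 => //; exact: ltW.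
    lra.
  have h2 : g * Dl <= L.
    case: (lerP 0 Dl) => h.
      have : g * Dl <= 1 * Dl by apply: ler_wpM2r => //; lra.
      lra.
    have : g * Dl <= 0 by apply: mulr_ge0_le0 => //; exact: ltW.
    lra.
  lra.

pose f1 (h : seq S) (s' : S) := p (c h) (a h) s'.
have f1sum : forall h, \sum_x f1 h x = 1 by move=> h; case: (hp (c h) (a h)).
have tot : \sum_(xs : T.-tuple S) traj_prob r p H delta T (sp vstar) sel s1 xs = 1.
  rewrite -(W_eq1 T [::] f1sum) /W; apply: eq_bigr => xs _; apply: eq_bigr => i _.
  by [].
have bad : \sum_(xs : T.-tuple S | eps < D xs) traj_prob r p H delta T (sp vstar) sel s1 xs <= delta.
  case: (lerP (T%:R * L) eps) => hTL.
    rewrite big1 ?ltW // => xs hxs; exfalso.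
    have : D xs <= T%:R * L.
      apply: (@le_trans _ _ (\sum_(i < T) L)); first by apply: ler_sum => i _; apply: mle.
      by rewrite sumr_const card_ord mulr_natl.
    lra.
  have TL0 : 0 < T%:R * L by lra.
  have T0 : 0 < T%:R :> R.
    rewrite lt_neqAle ler0n andbT; apply/eqP => h; rewrite -h mul0r in TL0; lra.
  have Lp : 0 < L.
    rewrite lt_neqAle L0 andbT; apply/eqP => h; rewrite -h mulr0 in TL0; lra.
  have uT : u < T%:R.
    by move: hTL; rewrite /eps mulrC ltr_pM2r.
  set lam := u / (T%:R * L).
  have lam0 : 0 <= lam by apply: divr_ge0 => //; lra.
  have lamL : lam * L <= 1.
    have -> : lam * L = u / T%:R.
      by rewrite /lam; field; rewrite !lt0r_neq0.
    by rewrite ler_pdivrMr // mul1r ltW.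
  pose f2 (h : seq S) (s' : S) := p (c h) (a h) s' * expR (lam * (m h - Vstar s')).
  have f20 : forall h s', 0 <= f2 h s'.
    move=> h s'; apply: mulr_ge0; last exact: expR_ge0.
    by case: (hp (c h) (a h)) => ->.
  have step : forall h, \sum_x f2 h x <= expR (lam ^+ 2 * L ^+ 2 / 2).
    move=> h.
    have [P0 P1] := hp (c h) (a h).
    have hmm : \sum_s' p (c h) (a h) s' * Vstar s' = m h by [].
    set P := p (c h) (a h) in P0 P1 hmm *.
    rewrite /f2 -/P.
    set mm := m h in hmm *.
    have hml : forall s', mm - Vstar s' <= L by move=> s'; apply: mle.
    have s1b : \sum_x P x * expR (lam * (mm - Vstar x)) <=
        \sum_x P x * (1 + lam * (mm - Vstar x) + 2 * (lam * (mm - Vstar x)) ^+ 2).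
      apply: ler_sum => x _; apply: ler_wpM2l => //; apply: expR_quad.
      apply: le_trans lamL; exact: ler_wpM2l.
    have s2 : \sum_x P x * (1 + lam * (mm - Vstar x) + 2 * (lam * (mm - Vstar x)) ^+ 2)
        = \sum_x P x * ((- lam) * Vstar x + (1 + lam * mm))
          + 2 * lam ^+ 2 * \sum_x P x * (mm - Vstar x) ^+ 2.
      rewrite [2 * lam ^+ 2 * _]mulr_sumr -big_split /=; apply: eq_bigr => x _; ring.
    rewrite (mean_lin hp) hmm in s2.
    pose cc := (Vstar vM + Vstar vm) / 2.
    have hvar1 : \sum_x P x * (Vstar x - cc) ^+ 2 <= L ^+ 2 / 4.
      apply: (mean_le hp) => x.
      have := HvM x; have := Hvm x; have := hV vM vm => h1 h2 h3.
      have : 0 <= (L / 2 - (Vstar x - cc)) * (L / 2 + (Vstar x - cc)).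
        apply: mulr_ge0; rewrite /cc; lra.
      move=> h4; nra.
    have hvar2 : \sum_x P x * (Vstar x - cc) ^+ 2 - \sum_x P x * (mm - Vstar x) ^+ 2
        = (mm - cc) ^+ 2.
      rewrite -sumrB.
      have -> : \sum_x (P x * (Vstar x - cc) ^+ 2 - P x * (mm - Vstar x) ^+ 2)
          = \sum_x P x * ((2 * (mm - cc)) * Vstar x + (cc ^+ 2 - mm ^+ 2)).
        by apply: eq_bigr => x _; ring.
      rewrite (mean_lin hp) hmm; ring.
    have hsq : 0 <= (mm - cc) ^+ 2 by apply: sqr_ge0.
    have l2 : 0 <= lam ^+ 2 by apply: sqr_ge0.
    have hv : \sum_x P x * (mm - Vstar x) ^+ 2 <= L ^+ 2 / 4 by lra.
    have : 2 * lam ^+ 2 * \sum_x P x * (mm - Vstar x) ^+ 2 <= 2 * lam ^+ 2 * (L ^+ 2 / 4).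
      by apply: ler_wpM2l => //; apply: mulr_ge0.
    have := expR_ge1Dx (lam ^+ 2 * L ^+ 2 / 2).
    move=> he hh.
    apply: (le_trans s1b); rewrite s2.
    have e4 : lam ^+ 2 * L ^+ 2 / 2 = 2 * lam ^+ 2 * (L ^+ 2 / 4) by field.
    rewrite e4; rewrite e4 in he.
    lra.
  have chern : \sum_(xs : T.-tuple S | eps < D xs) traj_prob r p H delta T (sp vstar) sel s1 xs
      <= \sum_(xs : T.-tuple S) traj_prob r p H delta T (sp vstar) sel s1 xs * expR (lam * (D xs - eps)).
    rewrite big_mkcond /=; apply: ler_sum => xs _.
    case: ifP => hd; last by apply: mulr_ge0 => //; exact: expR_ge0.
    have e1 : 1 <= expR (lam * (D xs - eps)).
      have := expR_ge1Dx (lam * (D xs - eps)).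
      have : 0 <= lam * (D xs - eps) by apply: mulr_ge0 => //; lra.
      lra.
    have := traj0 xs => t0.
    have : 0 <= traj_prob r p H delta T (sp vstar) sel s1 xs * (expR (lam * (D xs - eps)) - 1).
      by apply: mulr_ge0 => //; lra.
    rewrite mulrBr mulr1; lra.
  have eq2 : \sum_(xs : T.-tuple S) traj_prob r p H delta T (sp vstar) sel s1 xs * expR (lam * (D xs - eps))
      = expR (- (lam * eps)) * W T [::] f2.
    rewrite /W mulr_sumr; apply: eq_bigr => xs _.
    rewrite mulrBr expRD mulrA [RHS]mulrC; congr (_ * _).
    rewrite /D mulr_sumr expR_sum /traj_prob -big_split /=.
    by apply: eq_bigr => i _.
  have hW := W_le T [::] f20 (expR_ge0 _) step.
  apply: (le_trans chern); rewrite eq2.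
  apply: (@le_trans _ _ (expR (- (lam * eps)) * expR (lam ^+ 2 * L ^+ 2 / 2) ^+ T)).
    by apply: ler_wpM2l => //; exact: expR_ge0.
  rewrite -expRM_natl -expRD.
  have -> : - (lam * eps) + T%:R * (lam ^+ 2 * L ^+ 2 / 2) = - (u ^+ 2 / (2 * T%:R)).
    by rewrite /lam /eps; field; rewrite !lt0r_neq0.
  rewrite hu2.
  have -> : - (2 * T%:R * K / (2 * T%:R)) = - K.
    by congr (- _); field; exact: lt0r_neq0.
  rewrite /K lnV ?posrE // opprK lnK ?posrE //.
have hsplit : 1 = \sum_(xs : T.-tuple S | eps < D xs) traj_prob r p H delta T (sp vstar) sel s1 xs
   + \sum_(xs : T.-tuple S | ~~ (eps < D xs)) traj_prob r p H delta T (sp vstar) sel s1 xs.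
  by rewrite -tot (bigID (fun xs : T.-tuple S => eps < D xs)) /=.
apply: (@le_trans _ _ (\sum_(xs : T.-tuple S | ~~ (eps < D xs))
    traj_prob r p H delta T (sp vstar) sel s1 xs)); first by lra.
rewrite big_mkcond [X in _ <= X]big_mkcond /=; apply: ler_sum => xs _.
case: ifP => hd; last by case: ifP.
by rewrite ifT //; apply: good; rewrite leNgt hd.
Qed.
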